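(* Let $S$ be a Sauer Matrix of size $4$ and let $r \in [0,1)^4$ be feasible for $S$. (i) If $S$ is of type $(0,4)$, then $r = (\tfrac12,\tfrac12,\tfrac12,\tfrac12)^\intercal$. (ii) If $S$ is of type $(1,3)$, then $r = (0,\tfrac12,\tfrac12,\tfrac12)^\intercal$. (iii) If $S$ is of type $(2,2)$, then $r = (0,0,\tfrac12,\tfrac12)^\intercal$. (iv) If $S$ is of type $(3,1)$ or $(4,0)$, then $S$ is infeasible for translations (i.e. no such $r$ exists).
   Context: A real matrix is totally $1$-submodular if every square submatrix (of every size) has determinant of absolute value at most $1$. For $r\in\mathbb{R}^k$ and a matrix $S$ with $k$ rows and columns $S_1,\dots,S_N$, $r+S$ is the matrix with columns $r+S_i$. A Sauer Matrix of size $k$ is a matrix $S\in\{-1,0,1\}^{k\times 2^k}$ such that every subset of $[k]$ is the support (set of nonzero coordinates) of exactly one column, the nonzero entries being arbitrary elements of $\{-1,1\}$. A vector $r\in[0,1)^k$ is feasible for $S$ if $r+S$ is totally $1$-submodular; $S$ is feasible for translations if some $r\in[0,1)^k$ is feasible for $S$, and infeasible for translations otherwise. $S$ is of type $(s,k-s)$ if exactly $s$ of its rows contain at least one entry equal to $1$; by convention the rows are ordered so that these are the first $s$ rows. *)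

(* Defs.v *)
From mathcomp Require Import all_boot all_order all_algebra.
From mathcomp Require Import reals.
Set Implicit Arguments. Unset Strict Implicit. Unset Printing Implicit Defensive.
Import Order.TTheory GRing.Theory Num.Theory.
Local Open Scope ring_scope.

Definition totally_1_submodular (R : realType) (m n : nat) (M : 'M[R]_(m, n)) : Prop :=
  forall (p : nat) (f : 'I_p -> 'I_m) (g : 'I_p -> 'I_n),
    injective f -> injective g -> `|\det (mxsub f g M)| <= 1.

Definition col_support (k N : nat) (S : 'M[int]_(k, N)) (j : 'I_N) : {set 'I_k} :=
  [set i | S i j != 0].

Definition sauer_matrix (k : nat) (S : 'M[int]_(k, 2 ^ k)) : Prop :=
  (forall i j, S i j \in [:: 0; 1; -1]) /\
  (forall A : {set 'I_k}, exists! j : 'I_(2 ^ k), col_support S j = A).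

Definition translate (R : realType) (k N : nat) (r : 'cV[R]_k) (S : 'M[int]_(k, N))
  : 'M[R]_(k, N) := \matrix_(i, j) (r i 0 + (S i j)%:~R).

Definition feasible (R : realType) (k N : nat) (r : 'cV[R]_k) (S : 'M[int]_(k, N)) : Prop :=
  (forall i, 0 <= r i 0 < 1) /\ totally_1_submodular (translate r S).

Definition feasible_for_translations (R : realType) (k N : nat) (S : 'M[int]_(k, N)) : Prop :=
  exists r : 'cV[R]_k, feasible r S.

(* S is of type (s, k-s): exactly s rows contain an entry 1, and (by the
   ordering convention) these are the first s rows. *)
Definition sauer_type (k N : nat) (S : 'M[int]_(k, N)) (s : nat) : Prop :=
  forall i : 'I_k, (exists j, S i j = 1) <-> (i < s)%N.

(* Main.v *)
Require Import Defs.
From mathcomp Require Import all_boot all_order all_algebra.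
From mathcomp Require Import reals ring lra.
Import Order.TTheory GRing.Theory Num.Theory.
Local Open Scope ring_scope.

Definition colof (S : 'M[int]_(4, 2 ^ 4)) (A : {set 'I_4}) : 'I_(2 ^ 4) :=
  odflt (@Ordinal (2 ^ 4) 0 isT) [pick j | col_support S j == A].

Lemma colofP S (A : {set 'I_4}) : sauer_matrix S -> col_support S (colof S A) = A.
Proof.
case=> _ /(_ A) [j [Hj _]]; rewrite /colof; case: pickP => [k /eqP //|/(_ j)].
by rewrite Hj eqxx.
Qed.

Lemma colof_inj S : sauer_matrix S -> injective (colof S).
Proof. by move=> HS A B E; rewrite -(colofP S A HS) E colofP. Qed.

Lemma colof0 S (A : {set 'I_4}) (i : 'I_4) : sauer_matrix S -> i \notin A -> S i (colof S A) = 0.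
Proof. by move=> HS; rewrite -{1}(colofP S A HS) /col_support inE negbK => /eqP. Qed.

Lemma colof_sgn S (A : {set 'I_4}) (i : 'I_4) : sauer_matrix S -> i \in A ->
  S i (colof S A) = 1 \/ S i (colof S A) = -1.
Proof.
move=> HS; rewrite -{1}(colofP S A HS) inE; have := HS.1 i (colof S A).
by rewrite !inE => /or3P [] /eqP ->; rewrite ?eqxx //; [left|right].
Qed.

Definition Tsub (R : realType) (r : 'cV[R]_4) (S : 'M[int]_(4, 2 ^ 4))
  (rows : seq 'I_4) (sets : seq {set 'I_4}) (n m : nat) : R :=
  translate r S (nth ord0 rows n) (colof S (nth set0 sets m)).

Arguments Tsub {R}.

Lemma minor (R : realType) S (r : 'cV[R]_4) p (rows : seq 'I_4) (sets : seq {set 'I_4}) :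
  sauer_matrix S -> totally_1_submodular (translate r S) ->
  size rows = p -> size sets = p -> uniq rows -> uniq sets ->
  `|\det (\matrix_(i < p, k < p) Tsub r S rows sets i k)| <= 1.
Proof.
move=> HS Ht Hr Hs Ur Us.
apply: (Ht p (fun i => nth ord0 rows i) (fun k => colof S (nth set0 sets k))).
- by move=> i k /eqP; rewrite nth_uniq ?Hr // => /eqP; apply: val_inj.
- by move=> i k /(colof_inj S HS) /eqP; rewrite nth_uniq ?Hs // => /eqP; apply: val_inj.
Qed.
Lemma det2E (R : comNzRingType) (E : nat -> nat -> R) :
  \det (\matrix_(i < 2, k < 2) E i k) =
  E 0 0*E 1 1 - E 0 1*E 1 0.
Proof.
rewrite (expand_det_row _ ord0) !big_ord_recr big_ord0 /cofactor /=.
rewrite !(expand_det_row _ ord0) !big_ord_recr !big_ord0 /cofactor /= !det_mx00 !mxE /=.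
ring.
Qed.
Lemma det3E (R : comNzRingType) (E : nat -> nat -> R) :
  \det (\matrix_(i < 3, k < 3) E i k) =
  E 0 0*E 1 1*E 2 2 - E 0 0*E 1 2*E 2 1 - E 0 1*E 1 0*E 2 2 + E 0 1*E 1 2*E 2 0 + E 0 2*E 1 0*E 2 1 - E 0 2*E 1 1*E 2 0.
Proof.
rewrite (expand_det_row _ ord0) !big_ord_recr big_ord0 /cofactor /=.
rewrite !(expand_det_row _ ord0) !big_ord_recr !big_ord0 /cofactor /=.
rewrite !(expand_det_row _ ord0) !big_ord_recr !big_ord0 /cofactor /= !det_mx00 !mxE /=.
ring.
Qed.
Lemma det4E (R : comNzRingType) (E : nat -> nat -> R) :
  \det (\matrix_(i < 4, k < 4) E i k) =
  E 0 0*E 1 1*E 2 2*E 3 3 - E 0 0*E 1 1*E 2 3*E 3 2 - E 0 0*E 1 2*E 2 1*E 3 3 + E 0 0*E 1 2*E 2 3*E 3 1 + E 0 0*E 1 3*E 2 1*E 3 2 - E 0 0*E 1 3*E 2 2*E 3 1 - E 0 1*E 1 0*E 2 2*E 3 3 + E 0 1*E 1 0*E 2 3*E 3 2 + E 0 1*E 1 2*E 2 0*E 3 3 - E 0 1*E 1 2*E 2 3*E 3 0 - E 0 1*E 1 3*E 2 0*E 3 2 + E 0 1*E 1 3*E 2 2*E 3 0 + E 0 2*E 1 0*E 2 1*E 3 3 - E 0 2*E 1 0*E 2 3*E 3 1 - E 0 2*E 1 1*E 2 0*E 3 3 + E 0 2*E 1 1*E 2 3*E 3 0 + E 0 2*E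 1 3*E 2 0*E 3 1 - E 0 2*E 1 3*E 2 1*E 3 0 - E 0 3*E 1 0*E 2 1*E 3 2 + E 0 3*E 1 0*E 2 2*E 3 1 + E 0 3*E 1 1*E 2 0*E 3 2 - E 0 3*E 1 1*E 2 2*E 3 0 - E 0 3*E 1 2*E 2 0*E 3 1 + E 0 3*E 1 2*E 2 1*E 3 0.
Proof.
rewrite (expand_det_row _ ord0) !big_ord_recr big_ord0 /cofactor /=.
rewrite !(expand_det_row _ ord0) !big_ord_recr !big_ord0 /cofactor /=.
rewrite !(expand_det_row _ ord0) !big_ord_recr !big_ord0 /cofactor /=.
rewrite !(expand_det_row _ ord0) !big_ord_recr !big_ord0 /cofactor /= !det_mx00 !mxE /=.
ring.
Qed.
Definition sgn {R : realType} (s : R) := s = 1 \/ s = -1.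

Lemma key (R : realType) (x a1 a2 b1 b2 c1 c2 d0 d1 d2 : R) :
  sgn a1 -> sgn a2 -> sgn b1 -> sgn b2 -> sgn c1 -> sgn c2 -> sgn d0 -> sgn d1 -> sgn d2 ->
  `|x * (a1 * d1 - d0 * a2)| <= 1 ->
  `|x * (b1 * d2 - d1 * b2)| <= 1 ->
  `|x * (c1 * d2 - d0 * c2)| <= 1 ->
  `|x * (a1 * b1 * c2 + c1 * a2 * b2)| <= 1 ->
  `|x| * 2 <= 1.
Proof.
move=> Ha1 Ha2 Hb1 Hb2 Hc1 Hc2 Hd0 Hd1 Hd2.
have sq : forall s : R, sgn s -> `|s| = 1 by move=> s [->|->]; rewrite ?normrN normr1.
have sgM : forall s t : R, sgn s -> sgn t -> sgn (s * t).
  by move=> s t [->|->] [->|->]; rewrite /sgn ?mulN1r ?mulr1 ?mul1r ?opprK; [left|right|right|left].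
have dich : forall s t : R, sgn s -> sgn t -> s = t \/ s = - t.
  by move=> s t [->|->] [->|->]; rewrite ?opprK; [left|right|right|left].
case: (dich (a1 * d1) (d0 * a2) (sgM _ _ Ha1 Hd1) (sgM _ _ Hd0 Ha2)) => [E1|E1]; last first.
  have h : `|a1 * d1 - d0 * a2| = 2 by rewrite E1 -opprD normrN -mulr2n normrMn (sq _ (sgM _ _ Hd0 Ha2)).
  by rewrite !normrM h => H _ _ _.
case: (dich (b1 * d2) (d1 * b2) (sgM _ _ Hb1 Hd2) (sgM _ _ Hd1 Hb2)) => [E2|E2]; last first.
  have h : `|b1 * d2 - d1 * b2| = 2 by rewrite E2 -opprD normrN -mulr2n normrMn (sq _ (sgM _ _ Hd1 Hb2)).
  by rewrite !normrM h => _ H _ _.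
case: (dich (c1 * d2) (d0 * c2) (sgM _ _ Hc1 Hd2) (sgM _ _ Hd0 Hc2)) => [E3|E3]; last first.
  have h : `|c1 * d2 - d0 * c2| = 2 by rewrite E3 -opprD normrN -mulr2n normrMn (sq _ (sgM _ _ Hd0 Hc2)).
  by rewrite !normrM h => _ _ H _.
have s2 : forall s : R, sgn s -> s * s = 1 by move=> s [->|->]; rewrite ?mulrNN mulr1.
have ea1 : a1 = d0 * a2 * d1 by rewrite -E1 -mulrA (s2 _ Hd1) mulr1.
have eb1 : b1 = d1 * b2 * d2 by rewrite -E2 -mulrA (s2 _ Hd2) mulr1.
have ec1 : c1 = d0 * c2 * d2 by rewrite -E3 -mulrA (s2 _ Hd2) mulr1.
have : a1 * b1 * c2 + c1 * a2 * b2 = (d0 * a2 * b2 * c2 * d2) * 2.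
  rewrite ea1 eb1 ec1.
  have : d1 * d1 = 1 by exact: s2.
  move=> h. 
  transitivity ((d0 * a2 * b2 * c2 * d2) * (d1 * d1) + d0 * a2 * b2 * c2 * d2); first by ring.
  rewrite h; ring.
have Hs := sq _ (sgM _ _ (sgM _ _ (sgM _ _ (sgM _ _ Hd0 Ha2) Hb2) Hc2) Hd2).
move=> ->; move: (d0 * a2 * b2 * c2 * d2) Hs => s Hs.
by rewrite !normrM Hs mul1r (ger0_norm (ler0n _ 2)) => _ _ _.
Qed.

Lemma sgn_entry (R : realType) S (A : {set 'I_4}) (i : 'I_4) :
  sauer_matrix S -> i \in A -> sgn ((S i (colof S A))%:~R : R).
Proof.
by move=> HS iA; case: (colof_sgn S A i HS iA) => ->; rewrite /sgn ?mulr1z ?mulrN1z; [left|right].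
Qed.

Lemma half_bound (R : realType) S (r : 'cV[R]_4) (j a b c : 'I_4) (J : {set 'I_4}) (e : int) :
  sauer_matrix S -> totally_1_submodular (translate r S) -> uniq [:: j; a; b; c] ->
  a \notin J -> b \notin J -> c \notin J ->
  (forall X : {set 'I_4}, j \notin X -> S j (colof S (J :|: X)) = e) ->
  `|r j 0 + e%:~R| * 2 <= 1.
Proof.
move=> HS Ht U aJ bJ cJ HJ.
move: U; rewrite /= !inE !negb_or => /and4P[/and3P[ja jb jc] /andP[ab ac] bc _].
have ja' := negbTE ja; have jb' := negbTE jb; have jc' := negbTE jc.
have ab' := negbTE ab; have ac' := negbTE ac; have bc' := negbTE bc.
have aj' : (a == j) = false by rewrite eq_sym.
have bj' : (b == j) = false by rewrite eq_sym.
have cj' : (c == j) = false by rewrite eq_sym.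
have ba' : (b == a) = false by rewrite eq_sym.
have ca' : (c == a) = false by rewrite eq_sym.
have cb' : (c == b) = false by rewrite eq_sym.
have aJ' := negbTE aJ; have bJ' := negbTE bJ; have cJ' := negbTE cJ.
pose x := r j 0 + e%:~R.
have ej0 := HJ set0 ltac:(by rewrite inE).
have ejab := HJ [set a; b] ltac:(by rewrite !inE ja' jb').
have ejbc := HJ [set b; c] ltac:(by rewrite !inE jb' jc').
have ejac := HJ [set a; c] ltac:(by rewrite !inE ja' jc').
have ejabc := HJ [set a; b; c] ltac:(by rewrite !inE ja' jb' jc').
have za0 : S a (colof S (J :|: set0)) = 0 by apply: colof0; rewrite // !inE aJ'.
have zb0 : S b (colof S (J :|: set0)) = 0 by apply: colof0; rewrite // !inE bJ'.
have zc0 : S c (colof S (J :|: set0)) = 0 by apply: colof0; rewrite // !inE cJ'.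
have zcab : S c (colof S (J :|: [set a; b])) = 0 by apply: colof0; rewrite // !inE cJ' ca' cb'.
have zabc : S a (colof S (J :|: [set b; c])) = 0 by apply: colof0; rewrite // !inE aJ' ab' ac'.
have zbac : S b (colof S (J :|: [set a; c])) = 0 by apply: colof0; rewrite // !inE bJ' ba' bc'.
have sa1 := sgn_entry R S (J :|: [set a; b]) a HS ltac:(by rewrite !inE eqxx !orbT).
have sa2 := sgn_entry R S (J :|: [set a; b]) b HS ltac:(by rewrite !inE eqxx !orbT).
have sb1 := sgn_entry R S (J :|: [set b; c]) b HS ltac:(by rewrite !inE eqxx !orbT).
have sb2 := sgn_entry R S (J :|: [set b; c]) c HS ltac:(by rewrite !inE eqxx !orbT).
have sc1 := sgn_entry R S (J :|: [set a; c]) a HS ltac:(by rewrite !inE eqxx !orbT).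
have sc2 := sgn_entry R S (J :|: [set a; c]) c HS ltac:(by rewrite !inE eqxx !orbT).
have sd0 := sgn_entry R S (J :|: [set a; b; c]) a HS ltac:(by rewrite !inE eqxx !orbT).
have sd1 := sgn_entry R S (J :|: [set a; b; c]) b HS ltac:(by rewrite !inE eqxx !orbT).
have sd2 := sgn_entry R S (J :|: [set a; b; c]) c HS ltac:(by rewrite !inE eqxx !orbT).
have H1 : `|\det (\matrix_(i < 3, k < 3) Tsub r S [:: j; a; b] [:: J :|: set0; J :|: [set a; b]; J :|: [set a; b; c]] i k)| <= 1.
  apply: minor => //; first by rewrite /= !inE ?aJ' ?bJ' ?cJ' ?ja' ?jb' ?jc' ?ab' ?ac' ?bc' ?aj' ?bj' ?cj' ?ba' ?ca' ?cb'.
  apply: (map_uniq (f := fun X : {set 'I_4} => [:: a \in X; b \in X; c \in X])).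
  by rewrite /= !inE ?eqxx ?aJ' ?bJ' ?cJ' ?ja' ?jb' ?jc' ?ab' ?ac' ?bc' ?aj' ?bj' ?cj' ?ba' ?ca' ?cb'.
have H2 : `|\det (\matrix_(i < 3, k < 3) Tsub r S [:: j; b; c] [:: J :|: set0; J :|: [set b; c]; J :|: [set a; b; c]] i k)| <= 1.
  apply: minor => //; first by rewrite /= !inE ?aJ' ?bJ' ?cJ' ?ja' ?jb' ?jc' ?ab' ?ac' ?bc' ?aj' ?bj' ?cj' ?ba' ?ca' ?cb'.
  apply: (map_uniq (f := fun X : {set 'I_4} => [:: a \in X; b \in X; c \in X])).
  by rewrite /= !inE ?eqxx ?aJ' ?bJ' ?cJ' ?ja' ?jb' ?jc' ?ab' ?ac' ?bc' ?aj' ?bj' ?cj' ?ba' ?ca' ?cb'.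
have H3 : `|\det (\matrix_(i < 3, k < 3) Tsub r S [:: j; a; c] [:: J :|: set0; J :|: [set a; c]; J :|: [set a; b; c]] i k)| <= 1.
  apply: minor => //; first by rewrite /= !inE ?aJ' ?bJ' ?cJ' ?ja' ?jb' ?jc' ?ab' ?ac' ?bc' ?aj' ?bj' ?cj' ?ba' ?ca' ?cb'.
  apply: (map_uniq (f := fun X : {set 'I_4} => [:: a \in X; b \in X; c \in X])).
  by rewrite /= !inE ?eqxx ?aJ' ?bJ' ?cJ' ?ja' ?jb' ?jc' ?ab' ?ac' ?bc' ?aj' ?bj' ?cj' ?ba' ?ca' ?cb'.
have H4 : `|\det (\matrix_(i < 4, k < 4) Tsub r S [:: j; a; b; c] [:: J :|: set0; J :|: [set a; b]; J :|: [set b; c]; J :|: [set a; c]] i k)| <= 1.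
  apply: minor => //; first by rewrite /= !inE ?aJ' ?bJ' ?cJ' ?ja' ?jb' ?jc' ?ab' ?ac' ?bc' ?aj' ?bj' ?cj' ?ba' ?ca' ?cb'.
  apply: (map_uniq (f := fun X : {set 'I_4} => [:: a \in X; b \in X; c \in X])).
  by rewrite /= !inE ?eqxx ?aJ' ?bJ' ?cJ' ?ja' ?jb' ?jc' ?ab' ?ac' ?bc' ?aj' ?bj' ?cj' ?ba' ?ca' ?cb'.
rewrite det3E /Tsub /= /translate !mxE /= in H1.
rewrite det3E /Tsub /= /translate !mxE /= in H2.
rewrite det3E /Tsub /= /translate !mxE /= in H3.
rewrite det4E /Tsub /= /translate !mxE /= in H4.
rewrite ej0 ejab ejbc ejac ejabc za0 zb0 zc0 zcab zabc zbac ?mulr0z ?addr0 in H1 H2 H3 H4.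

move: sa1 sa2 sb1 sb2 sc1 sc2 sd0 sd1 sd2 H1 H2 H3 H4.
set a1 := (S a (colof S (J :|: [set a; b])))%:~R.
set a2 := (S b (colof S (J :|: [set a; b])))%:~R.
set b1 := (S b (colof S (J :|: [set b; c])))%:~R.
set b2 := (S c (colof S (J :|: [set b; c])))%:~R.
set c1 := (S a (colof S (J :|: [set a; c])))%:~R.
set c2 := (S c (colof S (J :|: [set a; c])))%:~R.
set d0 := (S a (colof S (J :|: [set a; b; c])))%:~R.
set d1 := (S b (colof S (J :|: [set a; b; c])))%:~R.
set d2 := (S c (colof S (J :|: [set a; b; c])))%:~R.
move=> sa1 sa2 sb1 sb2 sc1 sc2 sd0 sd1 sd2 H1 H2 H3 H4.
have E1 : forall y : R, y = x * (a1 * d1 - d0 * a2) -> `|y| <= 1 -> `|x * (a1 * d1 - d0 * a2)| <= 1 by move=> y ->.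
have E2 : forall y : R, y = x * (b1 * d2 - d1 * b2) -> `|y| <= 1 -> `|x * (b1 * d2 - d1 * b2)| <= 1 by move=> y ->.
have E3 : forall y : R, y = x * (c1 * d2 - d0 * c2) -> `|y| <= 1 -> `|x * (c1 * d2 - d0 * c2)| <= 1 by move=> y ->.
have E4 : forall y : R, y = x * (a1 * b1 * c2 + c1 * a2 * b2) -> `|y| <= 1 -> `|x * (a1 * b1 * c2 + c1 * a2 * b2)| <= 1 by move=> y ->.
apply: (key R x a1 a2 b1 b2 c1 c2 d0 d1 d2) => //.
- by apply: (E1 _ _ H1); rewrite /x; ring.
- by apply: (E2 _ _ H2); rewrite /x; ring.
- by apply: (E3 _ _ H3); rewrite /x; ring.
- by apply: (E4 _ _ H4); rewrite /x; ring.
Qed.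

Lemma no_feas (R : realType) S (r : 'cV[R]_4) (a b c : 'I_4) :
  sauer_matrix S -> totally_1_submodular (translate r S) -> uniq [:: a; b; c] ->
  r a 0 = 0 -> r b 0 = 0 -> r c 0 = 0 -> False.
Proof.
move=> HS Ht U ra rb rc.
move: U; rewrite /= !inE !negb_or => /and3P[/andP[ab ac] bc _].
have ab' := negbTE ab; have ac' := negbTE ac; have bc' := negbTE bc.
have ba' : (b == a) = false by rewrite eq_sym.
have ca' : (c == a) = false by rewrite eq_sym.
have cb' : (c == b) = false by rewrite eq_sym.
have zcab : S c (colof S [set a; b]) = 0 by apply: colof0; rewrite // !inE ca' cb'.
have zabc : S a (colof S [set b; c]) = 0 by apply: colof0; rewrite // !inE ab' ac'.
have zbac : S b (colof S [set a; c]) = 0 by apply: colof0; rewrite // !inE ba' bc'.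
have sa1 := sgn_entry R S [set a; b] a HS ltac:(by rewrite !inE eqxx ?orbT).
have sa2 := sgn_entry R S [set a; b] b HS ltac:(by rewrite !inE eqxx ?orbT).
have sb1 := sgn_entry R S [set b; c] b HS ltac:(by rewrite !inE eqxx ?orbT).
have sb2 := sgn_entry R S [set b; c] c HS ltac:(by rewrite !inE eqxx ?orbT).
have sc1 := sgn_entry R S [set a; c] a HS ltac:(by rewrite !inE eqxx ?orbT).
have sc2 := sgn_entry R S [set a; c] c HS ltac:(by rewrite !inE eqxx ?orbT).
have sd0 := sgn_entry R S [set a; b; c] a HS ltac:(by rewrite !inE eqxx ?orbT).
have sd1 := sgn_entry R S [set a; b; c] b HS ltac:(by rewrite !inE eqxx ?orbT).
have sd2 := sgn_entry R S [set a; b; c] c HS ltac:(by rewrite !inE eqxx ?orbT).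
have H1 : `|\det (\matrix_(i < 2, k < 2) Tsub r S [:: a; b] [:: [set a; b]; [set a; b; c]] i k)| <= 1.
  apply: minor => //; first by rewrite /= !inE ?ab' ?ac' ?bc' ?ba' ?ca' ?cb'.
  apply: (map_uniq (f := fun X : {set 'I_4} => [:: a \in X; b \in X; c \in X])).
  by rewrite /= !inE ?eqxx ?ab' ?ac' ?bc' ?ba' ?ca' ?cb'.
rewrite det2E /Tsub /= /translate !mxE /= in H1.
have H2 : `|\det (\matrix_(i < 2, k < 2) Tsub r S [:: b; c] [:: [set b; c]; [set a; b; c]] i k)| <= 1.
  apply: minor => //; first by rewrite /= !inE ?ab' ?ac' ?bc' ?ba' ?ca' ?cb'.
  apply: (map_uniq (f := fun X : {set 'I_4} => [:: a \in X; b \in X; c \in X])).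
  by rewrite /= !inE ?eqxx ?ab' ?ac' ?bc' ?ba' ?ca' ?cb'.
rewrite det2E /Tsub /= /translate !mxE /= in H2.
have H3 : `|\det (\matrix_(i < 2, k < 2) Tsub r S [:: a; c] [:: [set a; c]; [set a; b; c]] i k)| <= 1.
  apply: minor => //; first by rewrite /= !inE ?ab' ?ac' ?bc' ?ba' ?ca' ?cb'.
  apply: (map_uniq (f := fun X : {set 'I_4} => [:: a \in X; b \in X; c \in X])).
  by rewrite /= !inE ?eqxx ?ab' ?ac' ?bc' ?ba' ?ca' ?cb'.
rewrite det2E /Tsub /= /translate !mxE /= in H3.
have H4 : `|\det (\matrix_(i < 3, k < 3) Tsub r S [:: a; b; c] [:: [set a; b]; [set b; c]; [set a; c]] i k)| <= 1.
  apply: minor => //; first by rewrite /= !inE ?ab' ?ac' ?bc' ?ba' ?ca' ?cb'.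
  apply: (map_uniq (f := fun X : {set 'I_4} => [:: a \in X; b \in X; c \in X])).
  by rewrite /= !inE ?eqxx ?ab' ?ac' ?bc' ?ba' ?ca' ?cb'.
rewrite det3E /Tsub /= /translate !mxE /= in H4.
rewrite zcab zabc zbac ra rb rc ?mulr0z ?addr0 ?add0r in H1 H2 H3 H4.
move: sa1 sa2 sb1 sb2 sc1 sc2 sd0 sd1 sd2 H1 H2 H3 H4.
set a1 := (S a (colof S [set a; b]))%:~R.
set a2 := (S b (colof S [set a; b]))%:~R.
set b1 := (S b (colof S [set b; c]))%:~R.
set b2 := (S c (colof S [set b; c]))%:~R.
set c1 := (S a (colof S [set a; c]))%:~R.
set c2 := (S c (colof S [set a; c]))%:~R.
set d0 := (S a (colof S [set a; b; c]))%:~R.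
set d1 := (S b (colof S [set a; b; c]))%:~R.
set d2 := (S c (colof S [set a; b; c]))%:~R.
move=> sa1 sa2 sb1 sb2 sc1 sc2 sd0 sd1 sd2 H1 H2 H3 H4.
have E : forall y z : R, y = z -> `|y| <= 1 -> `|z| <= 1 by move=> y z ->.
have := key R 1 a1 a2 b1 b2 c1 c2 d0 d1 d2 sa1 sa2 sb1 sb2 sc1 sc2 sd0 sd1 sd2.
rewrite normr1 !mul1r => K.
have : (2 : R) <= 1.
  apply: K.
  - by apply: (E _ _ _ H1); ring.
  - by apply: (E _ _ _ H2); ring.
  - by apply: (E _ _ _ H3); ring.
  - by apply: (E _ _ _ H4); ring.
by move=> h; lra.
Qed.

Lemma row_half (R : realType) S (r : 'cV[R]_4) (j a b c : 'I_4) :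
  sauer_matrix S -> feasible r S -> uniq [:: j; a; b; c] ->
  (forall k, S j k != 1) -> r j 0 = 1 / 2.
Proof.
move=> HS [Hr Ht] U Hj.
have U' := U; move: U'; rewrite /= !inE !negb_or => /and4P[/and3P[ja jb jc] _ _ _].
have h1 := half_bound R S r j a b c set0 0 HS Ht U ltac:(by rewrite inE) ltac:(by rewrite inE) ltac:(by rewrite inE)
  (fun X jX => colof0 S (set0 :|: X) j HS ltac:(by rewrite set0U)).
have HJ : forall X : {set 'I_4}, j \notin X -> S j (colof S ([set j] :|: X)) = -1.
  move=> X _; have jin : j \in [set j] :|: X by rewrite !inE eqxx.
  by case: (colof_sgn S _ j HS jin) => // E; move: (Hj (colof S ([set j] :|: X))); rewrite E.
have h2 := half_bound R S r j a b c [set j] (-1) HS Ht U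
  ltac:(by rewrite inE eq_sym) ltac:(by rewrite inE eq_sym) ltac:(by rewrite inE eq_sym) HJ.
rewrite mulr0z addr0 in h1; rewrite mulrN1z in h2.
have n1 := ler_norm (r j 0); have n2 := ler_norm (- r j 0); rewrite normrN in n2.
have n3 := ler_norm (r j 0 - 1); have n4 := ler_norm (- (r j 0 - 1)); rewrite normrN in n4.
lra.
Qed.

Lemma zero_row (R : realType) (S : 'M[int]_(4, 2 ^ 4)) (r : 'cV[R]_4) (i : 'I_4) :
  feasible r S -> (exists k, S i k = 1) -> r i 0 = 0.
Proof.
move=> [Hr Ht] [k Hk].
have : `|\det (mxsub (fun _ : 'I_1 => i) (fun _ : 'I_1 => k) (translate r S))| <= 1.
  by apply: Ht => x y _; rewrite (ord1 x) (ord1 y).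
rewrite det_mx11 !mxE Hk mulr1z.
have := Hr i; case/andP => h0 h1.
rewrite ger0_norm; last by lra.
lra.
Qed.

Definition o0 : 'I_4 := @Ordinal 4 0 isT.
Definition o1 : 'I_4 := @Ordinal 4 1 isT.
Definition o2 : 'I_4 := @Ordinal 4 2 isT.
Definition o3 : 'I_4 := @Ordinal 4 3 isT.

Lemma ord4_cases (P : 'I_4 -> Prop) : P o0 -> P o1 -> P o2 -> P o3 -> forall i, P i.
Proof.
move=> h0 h1 h2 h3 [[|[|[|[|//]]]] Hi].
- by rewrite (_ : Ordinal Hi = o0) //; apply: val_inj.
- by rewrite (_ : Ordinal Hi = o1) //; apply: val_inj.
- by rewrite (_ : Ordinal Hi = o2) //; apply: val_inj.
- by rewrite (_ : Ordinal Hi = o3) //; apply: val_inj.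
Qed.

Lemma type_pos (S : 'M[int]_(4, 2 ^ 4)) s (i : 'I_4) : sauer_type S s -> (i < s)%N -> exists k, S i k = 1.
Proof. by move=> H /(proj2 (H i)). Qed.

Lemma type_neg (S : 'M[int]_(4, 2 ^ 4)) s (i : 'I_4) : sauer_type S s -> (s <= i)%N -> forall k, S i k != 1.
Proof.
move=> H si k; apply/eqP => E.
have := proj1 (H i) (ex_intro _ k E); by rewrite ltnNge si.
Qed.

Theorem proposition3p5 (R : realType) (S : 'M[int]_(4, 2 ^ 4)) :
  sauer_matrix S ->
  [/\ forall r : 'cV[R]_4, feasible r S -> sauer_type S 0 ->
        r = \col_i (1 / 2),
      forall r : 'cV[R]_4, feasible r S -> sauer_type S 1 ->
        r = \col_i (if (i < 1)%N then 0 else 1 / 2),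
      forall r : 'cV[R]_4, feasible r S -> sauer_type S 2 ->
        r = \col_i (if (i < 2)%N then 0 else 1 / 2)
    & (sauer_type S 3 \/ sauer_type S 4) -> ~ feasible_for_translations R S].
Proof.
move=> HS; split.
- move=> r Hf Ht; apply/matrixP => i k; rewrite (ord1 k) mxE.
  move: i; apply: ord4_cases.
  + by apply: (row_half R S r o0 o1 o2 o3) => //; apply: (type_neg _ _ _ Ht).
  + by apply: (row_half R S r o1 o0 o2 o3) => //; apply: (type_neg _ _ _ Ht).
  + by apply: (row_half R S r o2 o0 o1 o3) => //; apply: (type_neg _ _ _ Ht).
  + by apply: (row_half R S r o3 o0 o1 o2) => //; apply: (type_neg _ _ _ Ht).
- move=> r Hf Ht; apply/matrixP => i k; rewrite (ord1 k) mxE.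
  move: i; apply: ord4_cases => /=.
  + by apply: (zero_row _ _ _ _ Hf); apply: (type_pos _ _ _ Ht).
  + by apply: (row_half R S r o1 o0 o2 o3) => //; apply: (type_neg _ _ _ Ht).
  + by apply: (row_half R S r o2 o0 o1 o3) => //; apply: (type_neg _ _ _ Ht).
  + by apply: (row_half R S r o3 o0 o1 o2) => //; apply: (type_neg _ _ _ Ht).
- move=> r Hf Ht; apply/matrixP => i k; rewrite (ord1 k) mxE.
  move: i; apply: ord4_cases => /=.
  + by apply: (zero_row _ _ _ _ Hf); apply: (type_pos _ _ _ Ht).
  + by apply: (zero_row _ _ _ _ Hf); apply: (type_pos _ _ _ Ht).
  + by apply: (row_half R S r o2 o0 o1 o3) => //; apply: (type_neg _ _ _ Ht).
  + by apply: (row_half R S r o3 o0 o1 o2) => //; apply: (type_neg _ _ _ Ht).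
- move=> Ht [r Hf].
  have Hpos : forall i : 'I_4, (i < 3)%N -> r i 0 = 0.
    move=> i hi; apply: (zero_row _ _ _ _ Hf).
    by case: Ht => Ht; apply: (type_pos _ _ _ Ht); [exact: hi | exact: ltn_ord].
  apply: (no_feas R S r o0 o1 o2 HS Hf.2) => //; exact: Hpos.
Qed.
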